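(* Every fully $\mathrm{A}^{+1}$-representable finite distributive lattice is planar.
   Context: For a finite lattice $D$, $J(D)$ is the set of nonzero join-irreducible elements and $J^+(D)=J(D)\cup\{0,1\}$. For an algebra $A$, $\mathrm{Con}(A)$ is its congruence lattice and $\mathrm{Princ}(A)$ its set of principal congruences. $D$ is fully $\mathrm{A}^{+1}$-representable if for every $Q$ with $J^+(D)\subseteq Q\subseteq D$ there exist an algebra $A$ and a lattice isomorphism $\phi\colon\mathrm{Con}(A)\to D$ with $\phi(\mathrm{Princ}(A))=Q$. A lattice is planar if it is finite and has a planar Hasse diagram. *)

(* Defs.v *)
From HB Require Import structures.
From mathcomp Require Import all_boot all_order.
From Stdlib Require Import Reals.
Set Implicit Arguments. Unset Strict Implicit. Unset Printing Implicit Defensive.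
Import Order.Theory.
Local Open Scope order_scope.

Definition join_irr {d} {D : finTBDistrLatticeType d} (x : D) : Prop :=
  x <> \bot /\ forall y z : D, x = y `|` z -> x = y \/ x = z.

Definition Jplus {d} {D : finTBDistrLatticeType d} (x : D) : Prop :=
  join_irr x \/ x = \bot \/ x = \top.

Record algebra := Algebra {
  carrier : Type;
  some_elem : carrier;
  op_index : Type;
  arity : op_index -> nat;
  op : forall i : op_index, ('I_(arity i) -> carrier) -> carrier
}.

Definition is_congruence (A : algebra) (R : carrier A -> carrier A -> Prop) : Prop :=
  (forall x, R x x) /\
  (forall x y, R x y -> R y x) /\
  (forall x y z, R x y -> R y z -> R x z) /\
  (forall (i : op_index A) (u v : 'I_(arity i) -> carrier A),
      (forall k, R (u k) (v k)) -> R (op u) (op v)).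

Definition princ (A : algebra) (a b : carrier A) : carrier A -> carrier A -> Prop :=
  fun x y => forall R, is_congruence R -> R a b -> R x y.

(* phi restricted to Con(A) is a lattice isomorphism Con(A) -> D
   (Con(A) ordered by inclusion; an order isomorphism between lattices
   is the same as a lattice isomorphism). *)
Definition con_iso (A : algebra) {d} {D : finTBDistrLatticeType d}
    (phi : (carrier A -> carrier A -> Prop) -> D) : Prop :=
  (forall R S, is_congruence R -> is_congruence S ->
     ((forall x y, R x y -> S x y) <-> phi R <= phi S)) /\
  (forall q : D, exists R, is_congruence R /\ phi R = q).

Definition fully_A1_representable {d} (D : finTBDistrLatticeType d) : Prop :=
  forall Q : {set D}, (forall x : D, Jplus x -> x \in Q) ->
  exists (A : algebra) (phi : (carrier A -> carrier A -> Prop) -> D),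
    con_iso phi /\
    (forall q : D, q \in Q <-> exists a b : carrier A, phi (princ a b) = q).

Definition point := (R * R)%type.

Definition on_segment (p a b : point) : Prop :=
  exists t : R, Rle R0 t /\ Rle t R1 /\
    p = (Rplus (fst a) (Rmult t (Rminus (fst b) (fst a))),
         Rplus (snd a) (Rmult t (Rminus (snd b) (snd a)))).

Definition covers {d} {D : finTBDistrLatticeType d} (a b : D) : Prop :=
  a < b /\ forall c : D, ~ (a < c /\ c < b).

Definition planar {d} (D : finTBDistrLatticeType d) : Prop :=
  exists f : D -> point,
    injective f /\
    (forall x y : D, x < y -> Rlt (snd (f x)) (snd (f y))) /\
    (forall v a b : D, covers a b -> on_segment (f v) (f a) (f b) ->
        v = a \/ v = b) /\
    (forall a b c e : D, covers a b -> covers c e -> (a, b) <> (c, e) ->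
       forall p, on_segment p (f a) (f b) -> on_segment p (f c) (f e) ->
         exists x : D, (x = a \/ x = b) /\ (x = c \/ x = e) /\ p = f x).

(* Main.v *)
Require Import Defs.
From Stdlib Require Import Relations FunctionalExtensionality Reals Lra Lia.
From HB Require Import structures.
From mathcomp Require Import all_boot all_order zify.
Set Implicit Arguments. Unset Strict Implicit. Unset Printing Implicit Defensive.
Import Order.Theory.

Section Lat.
Context {d : Order.disp_t} {D : finTBDistrLatticeType d}.
Local Open Scope order_scope.
Implicit Types x y z p : D.

Definition jirrb (x : D) : bool := (x != \bot) &&
  [forall y : D, [forall z : D, (x == y `|` z) ==> (x == y) || (x == z)]].

Lemma jirrP x : join_irr x <-> jirrb x.
Proof.
split.
- move=> [nb H]; apply/andP; split; first by apply/eqP.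
  apply/forallP => y; apply/forallP => z; apply/implyP => /eqP e.
  by case: (H y z e) => ->; rewrite eqxx ?orbT.
- move=> /andP[/eqP nb /forallP H]; split; first exact: nb.
  move=> y z e.
  move: (H y) => /forallP /(_ z) /implyP; rewrite -e eqxx => /(_ isT) /orP[] /eqP ?;
  by [left|right].
Qed.

Lemma jprime p y z : jirrb p -> p <= y `|` z -> (p <= y) || (p <= z).
Proof.
move=> /andP[_ /forallP H] le.
move: (H (p `&` y)) => /forallP /(_ (p `&` z)) /implyP.
rewrite -meetUr (meet_idPl le) eqxx => /(_ isT) /orP[] /eqP e; apply/orP.
- by left; apply/meet_idPl; rewrite -e.
- by right; apply/meet_idPl; rewrite -e.
Qed.

Lemma jirr_neq0 p : jirrb p -> p != \bot.
Proof. by case/andP. Qed.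

Lemma le_of_J x y : (forall p, jirrb p -> p <= x -> p <= y) -> x <= y.
Proof.
suff: forall n x, #|[set z : D | z < x]| < n ->
   (forall p, jirrb p -> p <= x -> p <= y) -> x <= y by apply; apply: ltnSn.
elim=> [//|n IH] {}x hn H.
case: (boolP (jirrb x)) => [jx|njx]; first by apply: H.
case: (eqVneq x \bot) => [->|nb]; first by rewrite le0x.
move: njx; rewrite /jirrb nb /= => /forallPn [u] /forallPn [v].
rewrite negb_imply negb_or => /andP[/eqP e /andP[nu nv]].
have sub : forall t, t < x -> #|[set z : D | z < t]| < n.
  move=> t ltx; apply: (@leq_trans #|[set z : D | z < x]|); last by rewrite -ltnS.
  apply: proper_card; apply/properP; split.
    by apply/subsetP => s; rewrite !inE => /lt_le_trans; apply; apply: ltW.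
  by exists t; rewrite !inE ?ltxx.
have ltu : u < x by rewrite lt_neqAle eq_sym nu e leUl.
have ltv : v < x by rewrite lt_neqAle eq_sym nv e leUr.
rewrite e leUx; apply/andP; split.
- apply: IH; first exact: sub.
  move=> p jp pu; apply: H => //; apply: le_trans pu (ltW ltu).
- apply: IH; first exact: sub.
  move=> p jp pu; apply: H => //; apply: le_trans pu (ltW ltv).
Qed.

End Lat.

Section Alg.
Variable A : algebra.
Implicit Types R S : carrier A -> carrier A -> Prop.
Implicit Types a b x y : carrier A.

Lemma princ_cong a b : is_congruence (princ a b).
Proof.
split; [|split; [|split]].
- by move=> x R [hr _] _; apply: hr.
- by move=> x y H R hR hab; case: (hR) => _ [hs _]; apply: hs; apply: H.
- move=> x y z H1 H2 R hR hab; case: (hR) => _ [_ [ht _]].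
  by apply: ht (H1 R hR hab) (H2 R hR hab).
- move=> i u v H R hR hab; case: (hR) => _ [_ [_ ho]].
  by apply: ho => k; apply: H.
Qed.

Lemma princ_ab a b : princ a b a b.
Proof. by move=> R _ h. Qed.

Lemma princ_least a b R : is_congruence R -> R a b ->
  forall x y, princ a b x y -> R x y.
Proof. by move=> hR hab x y H; apply: H. Qed.

Definition upd n (w : 'I_n -> carrier A) (k : 'I_n) (a : carrier A) :=
  fun j : 'I_n => if j == k then a else w j.

Lemma clos_cong (U : relation (carrier A)) :
  (forall x y, U x y -> exists R, is_congruence R /\ (forall s t, R s t -> U s t) /\ R x y) ->
  is_congruence (clos_refl_trans _ U).
Proof.
move=> hU.
have Usym : forall x y, U x y -> U y x.
  move=> x y /hU [R [[_ [hs _]] [hRU hxy]]]; apply: hRU; exact: hs.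
have one : forall i (w : 'I_(arity i) -> carrier A) k a b,
    clos_refl_trans _ U a b ->
    clos_refl_trans _ U (op (upd w k a)) (op (upd w k b)).
  move=> i w k a b; elim.
  - move=> x y /hU [R [[hr [_ [_ ho]]] [hRU hxy]]]; apply: rt_step; apply: hRU.
    apply: ho => j; rewrite /upd; case: (j == k) => //.
  - by move=> x; apply: rt_refl.
  - by move=> x y z _ h1 _ h2; apply: rt_trans h2.
split; [|split; [|split]].
- by move=> x; apply: rt_refl.
- move=> x y; elim.
  + by move=> s t h; apply: rt_step; apply: Usym.
  + by move=> s; apply: rt_refl.
  + by move=> s t r _ h1 _ h2; apply: rt_trans h1.
- by move=> x y z h1 h2; apply: rt_trans h2.
- move=> i u v H.
  pose mix m := fun k : 'I_(arity i) => if (k < m)%N then v k else u k.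
  have mix0 : mix 0 = u by apply: functional_extensionality => k.
  have mixn : mix (arity i) = v.
    by apply: functional_extensionality => k; rewrite /mix ltn_ord.
  suff: forall m, clos_refl_trans _ U (op u) (op (mix m)) by rewrite -mixn; apply.
  elim=> [|m IH]; first by rewrite mix0; apply: rt_refl.
  apply: rt_trans IH _.
  case: (ltnP m (arity i)) => hm.
  + pose k := Ordinal hm.
    have e1 : mix m = upd (mix m) k (u k).
      apply: functional_extensionality => j; rewrite /upd /mix.
      case: eqP => [->|//]; by rewrite /= ltnn.
    have e2 : mix m.+1 = upd (mix m) k (v k).
      apply: functional_extensionality => j; rewrite /upd /mix ltnS leq_eqVlt.
      case: (eqVneq j k) => [->|ne]; first by rewrite /= eqxx.
      suff -> : (nat_of_ord j == m) = false by [].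
      apply/negbTE; apply: contra ne => /eqP ej; apply/eqP; apply: val_inj.
      by rewrite /= ej.
    by rewrite e2 {1}e1; apply: one; apply: H.
  + have -> : mix m.+1 = mix m.
      apply: functional_extensionality => j; rewrite /mix.
      by rewrite (leq_trans (ltn_ord j) hm) (leq_trans (ltn_ord j) (leqW hm)).
    by apply: rt_refl.
Qed.

End Alg.

Section Rep.
Context {d : Order.disp_t} {D : finTBDistrLatticeType d}.
Local Open Scope order_scope.
Variables a b c : D.
Hypotheses (ja : jirrb a) (jb : jirrb b) (jc : jirrb c).
Hypotheses (nab : ~~ (a <= b)) (nba : ~~ (b <= a)) (nbc : ~~ (b <= c))
  (ncb : ~~ (c <= b)) (nac : ~~ (a <= c)) (nca : ~~ (c <= a)).

Let w := a `|` b `|` c.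
Let tri := [:: a; b; c].

Lemma tri_eq x t : x \in tri -> t \in tri -> x <= t -> x = t.
Proof.
rewrite !inE => /or3P[]/eqP-> /or3P[]/eqP->;
by rewrite ?(negbTE nab) ?(negbTE nba) ?(negbTE nbc) ?(negbTE ncb)
   ?(negbTE nac) ?(negbTE nca).
Qed.

Lemma tri_j x : x \in tri -> jirrb x.
Proof. by rewrite !inE => /or3P[]/eqP->. Qed.

Lemma le_w x : x \in tri -> x <= w.
Proof.
rewrite /w !inE => /or3P[]/eqP->.
- exact: le_trans (leUl a b) (leUl _ c).
- exact: le_trans (leUr b a) (leUl _ c).
- exact: leUr c (a `|` b).
Qed.

Lemma helper ci x y : (jirrb ci \/ ci = \bot) -> ci <= w -> x \in tri -> y \in tri ->
  x != y -> x <= ci -> y <= ci -> False.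
Proof.
move=> [jci|->] ciw hx hy nxy xc yc.
- have [t ht ct] : exists2 t, t \in tri & ci <= t.
    move: (jprime jci ciw) => /orP[h|h]; last by exists c; rewrite ?inE ?eqxx ?orbT.
    move: (jprime jci h) => /orP[h'|h']; first by exists a; rewrite ?inE ?eqxx ?orbT.
    by exists b; rewrite ?inE ?eqxx ?orbT.
  have ex := tri_eq hx ht (le_trans xc ct).
  have ey := tri_eq hy ht (le_trans yc ct).
  by move: nxy; rewrite ex ey eqxx.
- have : x = \bot by apply/le_anti; rewrite xc le0x.
  by move/eqP; apply/negP; apply: jirr_neq0; apply: tri_j.
Qed.

Lemma pigeon c1 c2 : (jirrb c1 \/ c1 = \bot) -> (jirrb c2 \/ c2 = \bot) ->
  c1 <= w -> c2 <= w -> w <= c1 `|` c2 -> False.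
Proof.
move=> h1 h2 l1 l2 hw.
have mem : forall x, x \in tri -> (x <= c1) || (x <= c2).
  by move=> x hx; apply: jprime (tri_j hx) (le_trans (le_w hx) hw).
have ma : a \in tri by rewrite !inE eqxx.
have mb : b \in tri by rewrite !inE eqxx ?orbT.
have mc : c \in tri by rewrite !inE eqxx ?orbT.
have dab : a != b by apply: contra nab => /eqP->.
have dac : a != c by apply: contra nac => /eqP->.
have dbc : b != c by apply: contra nbc => /eqP->.
case/orP: (mem a ma) => ha; case/orP: (mem b mb) => hb; case/orP: (mem c mc) => hc;
first [ exact: (helper h1 l1 ma mb dab ha hb)
      | exact: (helper h2 l2 ma mb dab ha hb)
      | exact: (helper h1 l1 ma mc dac ha hc)
      | exact: (helper h2 l2 ma mc dac ha hc)
      | exact: (helper h1 l1 mb mc dbc hb hc)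
      | exact: (helper h2 l2 mb mc dbc hb hc) ].
Qed.

Lemma rep_no_anti3 : fully_A1_representable D -> False.
Proof.
move=> hfull.
pose Q : {set D} := [set x | [|| jirrb x, x == \bot, x == \top | x == w]].
have hQ : forall x, Jplus x -> x \in Q.
  move=> x [/jirrP jx|[->|->]]; by rewrite inE ?jx ?eqxx ?orbT.
have [A [phi [[hord hsurj] hprinc]]] := hfull Q hQ.
have [Ra [cRa pRa]] := hsurj a.
have [Rb [cRb pRb]] := hsurj b.
have [Rc [cRc pRc]] := hsurj c.
have [R0 [cR0 pR0]] := hsurj \bot.
pose U := fun x y => Ra x y \/ Rb x y \/ Rc x y.
pose T := clos_refl_trans _ U.
have cT : is_congruence T.
  apply: clos_cong => x y [h|[h|h]].
  - by exists Ra; split=> //; split=> // s t ?; left.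
  - by exists Rb; split=> //; split=> // s t ?; right; left.
  - by exists Rc; split=> //; split=> // s t ?; right; right.
have wT : w <= phi T.
  have sub : forall R, is_congruence R -> (forall s t, R s t -> U s t) -> phi R <= phi T.
    by move=> R cR hR; apply/(hord _ _ cR cT) => s t /hR h; apply: rt_step.
  rewrite /w !leUx -pRa -pRb -pRc !sub //.
  - by move=> s t ?; right; right.
  - by move=> s t ?; right; left.
  - by move=> s t ?; left.
have wQ : w \in Q by rewrite inE eqxx !orbT.
have [x0 [y0 pw]] := (proj1 (hprinc w)) wQ.
have Txy : T x0 y0.
  have := proj2 (hord _ _ (princ_cong x0 y0) cT); rewrite pw => /(_ wT).
  by apply; apply: princ_ab.
pose inv z := phi (princ x0 z) <= w /\ (jirrb (phi (princ x0 z)) \/ phi (princ x0 z) = \bot).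
have step : forall z z' R p, is_congruence R -> phi R = p -> p \in tri -> R z z' ->
    inv z -> inv z'.
  move=> z z' R p cR pR ptri hR [cw cj].
  set cc := phi (princ x0 z) in cw cj.
  have [V [cV pV]] := hsurj (cc `|` p).
  have Vxz : V x0 z.
    by apply: (proj2 (hord _ _ (princ_cong x0 z) cV)); [rewrite pV leUl|apply: princ_ab].
  have Vzz : V z z'.
    by apply: (proj2 (hord _ _ cR cV)); [rewrite pV pR leUr|].
  have Vxz' : V x0 z' by case: cV => _ [_ [ht _]]; apply: ht Vxz Vzz.
  have le1 : phi (princ x0 z') <= cc `|` p.
    by rewrite -pV; apply/(hord _ _ (princ_cong x0 z') cV); apply: princ_least.
  have ccpw : cc `|` p <= w by rewrite leUx cw le_w.
  have pj : jirrb p \/ p = \bot by left; apply: tri_j.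
  have inQ : phi (princ x0 z') \in Q by apply/(proj2 (hprinc _)); exists x0, z'.
  move: inQ; rewrite inE => /or4P[h|/eqP h|/eqP h|/eqP h].
  - by split; [apply: le_trans le1 ccpw|left].
  - by split; [apply: le_trans le1 ccpw|right].
  - exfalso; apply: (pigeon cj pj cw (le_w ptri)).
    by apply: le_trans le1; rewrite h lex1.
  - exfalso; apply: (pigeon cj pj cw (le_w ptri)).
    by rewrite -h.
have invT : forall z, T x0 z -> inv z.
  move=> z /clos_rt_rtn1_iff; elim.
  - have e : phi (princ x0 x0) = \bot.
      apply/le_anti; rewrite le0x andbT -pR0.
      by apply/(hord _ _ (princ_cong x0 x0) cR0); apply: princ_least; case: cR0.
    by rewrite /inv e le0x; split=> //; right.
  - move=> y z' [h|[h|h]] _ iy.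
    + by apply: (step y z' Ra a cRa pRa) => //; rewrite !inE eqxx.
    + by apply: (step y z' Rb b cRb pRb) => //; rewrite !inE eqxx ?orbT.
    + by apply: (step y z' Rc c cRc pRc) => //; rewrite !inE eqxx ?orbT.
have [_ hj] := invT y0 Txy; rewrite pw in hj.
apply: (pigeon hj (or_intror erefl) (lexx w) (le0x _)).
by rewrite leUl.
Qed.

End Rep.

Section Dil.
Context {d : Order.disp_t} {D : finTBDistrLatticeType d}.
Local Open Scope order_scope.

Definition chainS (C : {set D}) := forall x y, x \in C -> y \in C -> x >=< y.
Definition w2 (S : {set D}) := forall x y z, x \in S -> y \in S -> z \in S ->
  ~~ (x >=< y) -> ~~ (y >=< z) -> ~~ (x >=< z) -> False.

Lemma pick_top (X : {set D}) : X != set0 ->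
  exists2 t, t \in X & forall x, x \in X -> x >=< t -> x <= t.
Proof.
case/set0Pn => x0 hx0.
case: (arg_maxnP (fun x : D => #|[set z : D | z <= x]|) hx0) => t ht tmax.
exists t => // x hx /orP[//|tx].
have sub : [set z : D | z <= t] \subset [set z : D | z <= x].
  by apply/subsetP => z; rewrite !inE => zt; apply: le_trans zt tx.
have : [set z : D | z <= t] == [set z : D | z <= x].
  by rewrite eqEcard sub /=; apply: tmax.
by move/eqP/setP/(_ x); rewrite !inE lexx => ->.
Qed.

Lemma finish (S C1 C2 : {set D}) (m x1 : D) :
  m \in S -> (forall y, y \in S -> y >=< m -> y <= m) ->
  S :\ m = C1 :|: C2 -> chainS C1 -> chainS C2 ->
  x1 \in C1 -> x1 <= m ->
  (forall u v, u \in C1 -> v \in C2 -> ~~ (u >=< v) -> u <= x1) ->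
  exists C1' C2' : {set D}, [/\ chainS C1', chainS C2' & S = C1' :|: C2'].
Proof.
move=> mS mtop eS ch1 ch2 x1C x1m hx.
pose K := m |: [set z in C1 | z <= x1].
have C1S : forall z, z \in C1 -> z \in S.
  move=> z zC; have : z \in S :\ m by rewrite eS inE zC.
  by rewrite inE => /andP[].
exists K, (S :\: K); split.
- move=> u v; rewrite !inE => /orP[/eqP->|/andP[uC ux]] /orP[/eqP->|/andP[vC vx]].
  + exact: comparablexx.
  + by apply: ge_comparable; apply: le_trans vx x1m.
  + by apply: le_comparable; apply: le_trans ux x1m.
  + exact: ch1.
- move=> u v; rewrite !inE => /andP[uK uS] /andP[vK vS].
  move: uK vK; rewrite !negb_or => /andP[um uC] /andP[vm vC].
  have uS' : u \in C1 :|: C2 by rewrite -eS in_setD1 um uS.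
  have vS' : v \in C1 :|: C2 by rewrite -eS in_setD1 vm vS.
  case: (boolP (u >=< v)) => // nuv; exfalso.
  move: uS' vS'; rewrite !inE => /orP[u1|u2] /orP[v1|v2].
  + by move: nuv; rewrite ch1.
  + by move: uC; rewrite u1 (hx u v u1 v2 nuv).
  + by move: vC; rewrite v1 (hx v u v1 u2) // comparable_sym.
  + by move: nuv; rewrite ch2.
- apply/setP => z; rewrite !inE.
  case: (eqVneq z m) => [->|zm] /=; first by rewrite mS.
  case: (boolP (z \in C1)) => zC /=; last by [].
  by case: (z <= x1) => //=; rewrite C1S.
Qed.

Lemma dilworth2 (S : {set D}) : w2 S ->
  exists C1 C2 : {set D}, [/\ chainS C1, chainS C2 & S = C1 :|: C2].
Proof.
move: {2}#|S| (leqnn #|S|) => n; elim: n S => [|n IH] S hn hw.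
  exists set0, set0; split; try by move=> x y; rewrite inE.
  by rewrite setU0; apply/eqP; rewrite -cards_eq0 -leqn0.
case: (eqVneq S set0) => [->|Sn0].
  by exists set0, set0; split; try (by move=> x y; rewrite inE); rewrite setU0.
have [m mS mtop] := pick_top Sn0.
have hw' : w2 (S :\ m).
  by move=> x y z; rewrite !inE => /andP[_ ?] /andP[_ ?] /andP[_ ?]; apply: hw.
have hn' : (#|S :\ m| <= n)%N.
  by have := cardsD1 m S; rewrite mS /= => e; rewrite -ltnS -add1n -e.
have [C1 [C2 [ch1 ch2 eS]]] := IH (S :\ m) hn' hw'.
have C1S : forall z, z \in C1 -> z \in S.
  move=> z zC; have : z \in S :\ m by rewrite eS inE zC.
  by rewrite inE => /andP[].
have C2S : forall z, z \in C2 -> z \in S.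
  move=> z zC; have : z \in S :\ m by rewrite eS inE zC orbT.
  by rewrite inE => /andP[].
pose X1 := [set u in C1 | [exists v in C2, ~~ (u >=< v)]].
pose X2 := [set v in C2 | [exists u in C1, ~~ (u >=< v)]].
case: (eqVneq X1 set0) => [X10|X1n0].
  exists (S :\ m), [set m]; split.
  - move=> u v; rewrite eS !inE => /orP[u1|u2] /orP[v1|v2]; try by [apply: ch1|apply: ch2].
    + case: (boolP (u >=< v)) => // nuv.
      have : u \in X1 by rewrite inE u1; apply/existsP; exists v; rewrite v2.
      by rewrite X10 inE.
    + case: (boolP (u >=< v)) => // nuv.
      have : v \in X1.
        by rewrite inE v1; apply/existsP; exists u; rewrite u2 comparable_sym.
      by rewrite X10 inE.
  - by move=> u v; rewrite !inE => /eqP-> /eqP->; apply: comparablexx.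
  - by rewrite setUC setD1K.
have X2n0 : X2 != set0.
  case/set0Pn: X1n0 => u; rewrite inE => /andP[uC /existsP[v /andP[vC nuv]]].
  by apply/set0Pn; exists v; rewrite inE vC; apply/existsP; exists u; rewrite uC.
have [x1 x1X x1top] := pick_top X1n0.
have [x2 x2X x2top] := pick_top X2n0.
have X1le : forall u v, u \in C1 -> v \in C2 -> ~~ (u >=< v) -> u <= x1.
  move=> u v uC vC nuv; apply: x1top.
    by rewrite inE uC; apply/existsP; exists v; rewrite vC.
  by apply: ch1 => //; move: x1X; rewrite inE => /andP[].
have X2le : forall u v, u \in C1 -> v \in C2 -> ~~ (u >=< v) -> v <= x2.
  move=> u v uC vC nuv; apply: x2top.
    by rewrite inE vC; apply/existsP; exists u; rewrite uC.
  by apply: ch2 => //; move: x2X; rewrite inE => /andP[].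
move: (x1X) (x2X); rewrite !inE => /andP[x1C /existsP[y /andP[yC ny]]]
   /andP[x2C /existsP[x /andP[xC nx]]].
have n12 : ~~ (x1 >=< x2).
  apply/negP => /orP[h|h].
  - have h' := X1le _ _ xC x2C nx.
    by move: nx; rewrite (le_comparable (le_trans h' h)).
  - have h' := X2le _ _ x1C yC ny.
    by move: ny; rewrite comparable_sym (le_comparable (le_trans h' h)).
case: (boolP (x1 >=< m)) => [c1|nc1].
  apply: (finish mS mtop eS ch1 ch2 x1C (mtop _ (C1S _ x1C) c1)).
  exact: X1le.
case: (boolP (x2 >=< m)) => [c2|nc2].
  apply: (finish (C1 := C2) (C2 := C1) mS mtop _ ch2 ch1 x2C (mtop _ (C2S _ x2C) c2)).
    by rewrite setUC.
  by move=> u v uC vC nuv; apply: (X2le v u) => //; rewrite comparable_sym.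
by exfalso; apply: (hw x1 x2 m (C1S _ x1C) (C2S _ x2C) mS n12).
Qed.

End Dil.

Section Grid.
Context {d : Order.disp_t} {D : finTBDistrLatticeType d}.
Local Open Scope order_scope.
Variables C1 C2 : {set D}.
Hypotheses (ch1 : chainS C1) (ch2 : chainS C2)
  (eJ : [set x : D | jirrb x] = C1 :|: C2).

Definition dset (C : {set D}) (x : D) := [set p in C | p <= x].
Definition gi x := #|dset C1 x|.
Definition gj x := #|dset (C2 :\: C1) x|.

Lemma chain_sub (C : {set D}) x y : chainS C ->
  (dset C x \subset dset C y) \/ (dset C y \subset dset C x).
Proof.
move=> ch; case: (boolP (dset C x \subset dset C y)) => [h|/subsetPn [p]]; first by left.
rewrite !inE => /andP[pC px] /nandP[/negP//|npy]; right.
apply/subsetP => q; rewrite !inE => /andP[qC qy]; rewrite qC /=.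
case/orP: (ch p q pC qC) => h; first by move: npy; rewrite (le_trans h qy).
exact: le_trans h px.
Qed.

Lemma chain_eq (C : {set D}) x y : chainS C -> #|dset C x| = #|dset C y| ->
  dset C x = dset C y.
Proof.
move=> ch e; case: (chain_sub x y ch) => h; apply/eqP.
- by rewrite eqEcard h e leqnn.
- by rewrite eq_sym eqEcard h e leqnn.
Qed.

Lemma inJ p : jirrb p -> (p \in C1) || (p \in C2 :\: C1).
Proof.
move=> jp; have : p \in [set x : D | jirrb x] by rewrite inE.
rewrite eJ !inE; by case: (p \in C1); case: (p \in C2).
Qed.

Lemma chD : chainS (C2 :\: C1).
Proof. by move=> x y; rewrite !inE => /andP[_ ?] /andP[_ ?]; apply: ch2. Qed.

Lemma g_inj x y : gi x = gi y -> gj x = gj y -> x = y.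
Proof.
move=> e1 e2.
have s1 := chain_eq ch1 e1; have s2 := chain_eq chD e2.
have H : forall u v, dset C1 u = dset C1 v -> dset (C2 :\: C1) u = dset (C2 :\: C1) v ->
    u <= v.
  move=> u v h1 h2; apply: le_of_J => p jp pu.
  case/orP: (inJ jp) => pC.
  - have : p \in dset C1 u by rewrite inE pC pu.
    by rewrite h1 inE => /andP[].
  - have : p \in dset (C2 :\: C1) u by rewrite inE pC pu.
    by rewrite h2 inE => /andP[].
by apply/le_anti; rewrite !H.
Qed.

Lemma dset_mono (C : {set D}) x y : x <= y -> (#|dset C x| <= #|dset C y|)%N.
Proof.
move=> xy; apply: subset_leq_card; apply/subsetP => p; rewrite !inE.
by case/andP=> -> px; apply: le_trans px xy.
Qed.

Lemma g_lt x y : x < y -> (gi x + gj x < gi y + gj y)%N.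
Proof.
move=> lt; have le := ltW lt.
have h1 := dset_mono C1 le; have h2 := dset_mono (C2 :\: C1) le.
rewrite /gi /gj in h1 h2 *.
case: (eqVneq (gi x) (gi y)) => e1; last by rewrite /gi in e1; lia.
case: (eqVneq (gj x) (gj y)) => e2; last by rewrite /gi /gj in e1 e2; lia.
by move: lt; rewrite (g_inj e1 e2) ltxx.
Qed.

Lemma dset_cover (C : {set D}) a b p : C \subset [set x : D | jirrb x] ->
  ~~ (p <= a) ->
  (forall q, jirrb q -> (q <= b) = (q <= a) || (q == p)) ->
  #|dset C b| = ((p \in C) + #|dset C a|)%N.
Proof.
move=> CJ npa hq.
have jC : forall q, q \in C -> jirrb q.
  by move=> q qC; move/subsetP: CJ => /(_ q qC); rewrite inE.
case: (boolP (p \in C)) => pC.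
- have -> : dset C b = p |: dset C a.
    apply/setP => q; rewrite !inE; case: (boolP (q \in C)) => qC /=.
      by rewrite hq ?jC // orbC.
    by rewrite orbF; apply/esym/negbTE; apply: contra qC => /eqP->.
  by rewrite cardsU1 inE pC /= npa.
- rewrite /nat_of_bool add0n; apply: eq_card => q; rewrite !inE.
  case: (boolP (q \in C)) => qC //=.
  rewrite hq ?jC //; case: (eqVneq q p) => [e|]; last by rewrite orbF.
  by move: pC; rewrite -e qC.
Qed.

Lemma g_cov a b : covers a b ->
  (gi b = (gi a).+1 /\ gj b = gj a) \/ (gi b = gi a /\ gj b = (gj a).+1).
Proof.
move=> [ab nmid].
case: (boolP [exists p, [&& jirrb p, p <= b & ~~ (p <= a)]]); last first.
  move=> hn; exfalso; move: (ab); rewrite lt_neqAle => /andP[nab le_ab].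
  suff ba : b <= a by move: nab; rewrite (@le_anti _ _ a b) ?eqxx // le_ab ba.
  apply: le_of_J => q jq qb; case: (boolP (q <= a)) => // nqa.
  by move: hn; rewrite negb_exists => /forallP /(_ q); rewrite jq qb nqa.
move=> /existsP [p /and3P [jp pb npa]].
have apb : a `|` p = b.
  apply/eqP; case: (eqVneq (a `|` p) b) => // ne; exfalso; apply: (nmid (a `|` p)).
  split.
  - rewrite lt_neqAle leUl andbT; apply/eqP => e.
    by move: npa; rewrite e leUr.
  - by rewrite lt_neqAle ne leUx (ltW ab) pb.
have hq : forall q, jirrb q -> (q <= b) = (q <= a) || (q == p).
  move=> q jq; apply/idP/idP.
  - rewrite -apb => qb; case: (boolP (q <= a)) => //= nqa.
    have qp : q <= p by move: (jprime jq qb); rewrite (negbTE nqa).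
    have aqb : a `|` q = b.
      apply/eqP; case: (eqVneq (a `|` q) b) => // ne; exfalso; apply: (nmid (a `|` q)).
      split.
      + rewrite lt_neqAle leUl andbT; apply/eqP => e.
        by move: nqa; rewrite e leUr.
      + by rewrite lt_neqAle ne leUx (ltW ab) (le_trans qp pb).
    have pq : p <= q.
      have h : p <= a `|` q by rewrite aqb.
      by move: (jprime jp h); rewrite (negbTE npa).
    by apply/eqP; apply: le_anti; rewrite qp pq.
  - by case/orP => [qa|/eqP->//]; apply: le_trans qa (ltW ab).
have CJ1 : C1 \subset [set x : D | jirrb x] by rewrite eJ subsetUl.
have CJ2 : C2 :\: C1 \subset [set x : D | jirrb x].
  by rewrite eJ; apply: subset_trans (subsetDl _ _) (subsetUr _ _).
have e1 := dset_cover CJ1 npa hq; have e2 := dset_cover CJ2 npa hq.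
rewrite /gi /gj e1 e2.
case/orP: (inJ jp) => pC.
- by left; rewrite inE pC /=; split; lia.
- by right; move: pC; rewrite inE => /andP[/negbTE -> ->] /=; split; lia.
Qed.

End Grid.

Section RealAux.
Local Open Scope R_scope.

Definition pt (al be : R) : point := (al - be, al + be).

Lemma pt_inj al be al' be' : pt al be = pt al' be' -> al = al' /\ be = be'.
Proof. by case=> h1 h2; split; lra. Qed.

Lemma seg1 (m n : nat) (t : R) : 0 <= t <= 1 -> INR m = INR n + t ->
  (m = n /\ t = 0) \/ (m = n.+1 /\ t = 1).
Proof.
move=> [t0 t1] e.
have h1 : (n <= m)%coq_nat by apply: INR_le; lra.
have h2 : (m <= n.+1)%coq_nat by apply: INR_le; rewrite S_INR; lra.
have [em|em] : m = n \/ m = n.+1 by lia.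
all: subst m.
- by left; split=> //; lra.
- by right; split=> //; rewrite S_INR in e; lra.
Qed.

Lemma seg2 (m n : nat) (t s : R) : 0 <= t <= 1 -> 0 <= s <= 1 ->
  INR m + t = INR n + s ->
  (m = n /\ t = s) \/ (n = m.+1 /\ t = 1 /\ s = 0) \/ (m = n.+1 /\ t = 0 /\ s = 1).
Proof.
move=> [t0 t1] [s0 s1] e.
have h1 : (n <= m.+1)%coq_nat by apply: INR_le; rewrite S_INR; lra.
have h2 : (m <= n.+1)%coq_nat by apply: INR_le; rewrite S_INR; lra.
have [em|[em|em]] : m = n \/ m = n.+1 \/ n = m.+1 by lia.
- by subst m; left; split=> //; lra.
- by subst m; right; right; rewrite S_INR in e; split=> //; lra.
- by subst n; right; left; rewrite S_INR in e; split=> //; lra.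
Qed.

End RealAux.

Section Draw.
Context {d : Order.disp_t} {D : finTBDistrLatticeType d}.
Variables C1 C2 : {set D}.
Hypotheses (ch1 : chainS C1) (ch2 : chainS C2)
  (eJ : [set x : D | jirrb x] = C1 :|: C2).


Definition fpt (x : D) : point := pt (INR (gi C1 x)) (INR (gj C1 C2 x)).

Lemma fpt_inj : injective fpt.
Proof.
move=> x y /pt_inj [/INR_eq e1 /INR_eq e2].
exact: (g_inj ch1 ch2 eJ e1 e2).
Qed.

Lemma fpt_lt x y : (x < y)%O -> Rlt (snd (fpt x)) (snd (fpt y)).
Proof.
move=> /(g_lt ch1 ch2 eJ) /ssrnat.ltP h; rewrite /fpt /pt /= -!plus_INR.
exact: lt_INR.
Qed.

Local Open Scope R_scope.

Lemma seg_pt a b p : covers a b -> on_segment p (fpt a) (fpt b) ->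
  exists t, 0 <= t <= 1 /\
   ((gi C1 b = (gi C1 a).+1 /\ gj C1 C2 b = gj C1 C2 a /\
      p = pt (INR (gi C1 a) + t) (INR (gj C1 C2 a))) \/
    (gi C1 b = gi C1 a /\ gj C1 C2 b = (gj C1 C2 a).+1 /\
      p = pt (INR (gi C1 a)) (INR (gj C1 C2 a) + t))).
Proof.
move=> cov [t [t0 [t1 ->]]]; exists t; split; first by split.
case: (g_cov eJ cov) => [[e1 e2]|[e1 e2]].
- left; split=> //; split=> //; rewrite /fpt /pt /= e1 e2 S_INR.
  by f_equal; ring.
- right; split=> //; split=> //; rewrite /fpt /pt /= e1 e2 S_INR.
  by f_equal; ring.
Qed.

Lemma fin_pt p a b c e : (p = fpt a \/ p = fpt b) -> (p = fpt c \/ p = fpt e) ->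
  exists x, (x = a \/ x = b) /\ (x = c \/ x = e) /\ p = fpt x.
Proof.
move=> h1 h2.
have key : forall x y, p = fpt x -> p = fpt y -> x = y.
  by move=> x y hx hy; apply: fpt_inj; rewrite -hx -hy.
case: h1 => h1; case: h2 => h2.
- by exists a; split; [left|split; [left; apply: key|]].
- by exists a; split; [left|split; [right; apply: key|]].
- by exists b; split; [right|split; [left; apply: key|]].
- by exists b; split; [right|split; [right; apply: key|]].
Qed.

Lemma endH a b p t n : gi C1 b = (gi C1 a).+1 -> gj C1 C2 b = gj C1 C2 a ->
  p = pt (INR (gi C1 a) + t) (INR (gj C1 C2 a)) -> 0 <= t <= 1 ->
  INR n = INR (gi C1 a) + t -> p = fpt a \/ p = fpt b.
Proof.
move=> e1 e2 -> tb hn; case: (seg1 tb hn) => [[_ ->]|[_ ->]].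
- by left; rewrite /fpt Rplus_0_r.
- by right; rewrite /fpt e1 e2 S_INR.
Qed.

Lemma endV a b p t n : gi C1 b = gi C1 a -> gj C1 C2 b = (gj C1 C2 a).+1 ->
  p = pt (INR (gi C1 a)) (INR (gj C1 C2 a) + t) -> 0 <= t <= 1 ->
  INR n = INR (gj C1 C2 a) + t -> p = fpt a \/ p = fpt b.
Proof.
move=> e1 e2 -> tb hn; case: (seg1 tb hn) => [[_ ->]|[_ ->]].
- by left; rewrite /fpt Rplus_0_r.
- by right; rewrite /fpt e1 e2 S_INR.
Qed.

Lemma vert_on_edge v a b : covers a b -> on_segment (fpt v) (fpt a) (fpt b) ->
  v = a \/ v = b.
Proof.
move=> cov /(seg_pt cov) [t [tb [[e1 [e2 hp]]|[e1 [e2 hp]]]]].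
- move: (hp); rewrite /fpt => /pt_inj [h1 h2].
  case: (endH e1 e2 hp tb h1) => /fpt_inj; by [left|right].
- move: (hp); rewrite /fpt => /pt_inj [h1 h2].
  case: (endV e1 e2 hp tb h2) => /fpt_inj; by [left|right].
Qed.

Lemma edges_meet a b c e : covers a b -> covers c e -> (a, b) <> (c, e) ->
  forall p, on_segment p (fpt a) (fpt b) -> on_segment p (fpt c) (fpt e) ->
  exists x : D, (x = a \/ x = b) /\ (x = c \/ x = e) /\ p = fpt x.
Proof.
move=> cab cce ne p /(seg_pt cab) [t [tb H1]] /(seg_pt cce) [s [sb H2]].
case: H1 => [[e1 [e2 hp]]|[e1 [e2 hp]]]; case: H2 => [[f1 [f2 hq]]|[f1 [f2 hq]]];
  move: (hq); rewrite hp => /pt_inj [h1 h2].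
- move/INR_eq: h2 => ej.
  case: (seg2 tb sb h1) => [[ei ets]|[[ei [ht hs]]|[ei [ht hs]]]].
  + exfalso; apply: ne.
    have ac : a = c by apply: (g_inj ch1 ch2 eJ).
    have be : b = e by apply: (g_inj ch1 ch2 eJ); rewrite ?e1 ?f1 ?e2 ?f2 ?ei ?ej.
    by rewrite ac be.
  + subst t s; apply: fin_pt; [right|left].
    * by rewrite -hp hp /fpt e1 e2 S_INR.
    * by rewrite -hp hq /fpt Rplus_0_r.
  + subst t s; apply: fin_pt; [left|right].
    * by rewrite -hp hp /fpt Rplus_0_r.
    * by rewrite -hp hq /fpt f1 f2 S_INR.
- apply: fin_pt.
  + rewrite -hp; exact: (endH e1 e2 hp tb (esym h1)).
  + rewrite -hp; exact: (endV f1 f2 hq sb h2).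
- apply: fin_pt.
  + rewrite -hp; exact: (endV e1 e2 hp tb (esym h2)).
  + rewrite -hp; exact: (endH f1 f2 hq sb h1).
- move/INR_eq: h1 => ei.
  case: (seg2 tb sb h2) => [[ej ets]|[[ej [ht hs]]|[ej [ht hs]]]].
  + exfalso; apply: ne.
    have ac : a = c by apply: (g_inj ch1 ch2 eJ).
    have be : b = e by apply: (g_inj ch1 ch2 eJ); rewrite ?e1 ?f1 ?e2 ?f2 ?ei ?ej.
    by rewrite ac be.
  + subst t s; apply: fin_pt; [right|left].
    * by rewrite -hp hp /fpt e1 e2 S_INR.
    * by rewrite -hp hq /fpt Rplus_0_r.
  + subst t s; apply: fin_pt; [left|right].
    * by rewrite -hp hp /fpt Rplus_0_r.
    * by rewrite -hp hq /fpt f1 f2 S_INR.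
Qed.

End Draw.

Theorem lemma4p1 (d : Order.disp_t) (D : finTBDistrLatticeType d) :
  fully_A1_representable D -> planar D.
Proof.
move=> hfull.
have hw : w2 [set x : D | jirrb x].
  move=> x y z; rewrite !inE => jx jy jz nxy nyz nxz.
  move: nxy nyz nxz; rewrite /Order.comparable !negb_or.
  move=> /andP[n1 n2] /andP[n3 n4] /andP[n5 n6].
  exact: (rep_no_anti3 jx jy jz n1 n2 n3 n4 n5 n6 hfull).
have [C1 [C2 [ch1 ch2 eJ]]] := dilworth2 hw.
exists (fpt C1 C2); split; first exact: (fpt_inj ch1 ch2 eJ).
split; first by move=> x y; apply: (fpt_lt ch1 ch2 eJ).
split.
- by move=> v a b; apply: (vert_on_edge ch1 ch2 eJ).
- by move=> a b c e; apply: (edges_meet ch1 ch2 eJ).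
Qed.
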